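(* Let $\mu$ be a Borel probability measure on $\mathbb{R}^d$ and $u\in\mathbb{R}^d$. Let $\{\theta_k\}_{k\in\mathbb{N}}\subset(0,\pi/2)$ and $\{v_k\}_{k\in\mathbb{N}}\subset\mathcal{S}^{d-1}$ satisfy $\theta_k\to0^+$ and $v_k\to v$ as $k\to\infty$. Then $$\limsup_{k\to\infty}\mu(\mathcal{A}_{u,v_k,\theta_k})\leq\mu(\{y:\langle y-u,v\rangle\geq0\}).$$
   Context: For $u\in\mathbb{R}^d$, $e\in\mathcal{S}^{d-1}$, $\theta\in(0,\pi/2)$: $\mathcal{A}_{u,e,\theta}=\{y\in\mathbb{R}^d:\langle u-y,e\rangle\leq\|u-y\|\,|\sin\theta|/(1-\sin^2\theta)^{1/2}\}$. *)

(* Defs.v *)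
From HB Require Import structures.
From mathcomp Require Import all_boot all_order all_algebra.
From mathcomp Require Import all_classical all_reals all_analysis.
Set Implicit Arguments. Unset Strict Implicit. Unset Printing Implicit Defensive.
Import Order.TTheory GRing.Theory Num.Theory.
Import numFieldNormedType.Exports.
Local Open Scope classical_set_scope.
Local Open Scope ring_scope.

(* R^d is represented by row vectors 'rV[R]_d (product topology = Euclidean
   topology).  Its Borel sigma-algebra is the one generated by the open sets. *)
Definition Rd (R : realType) (d : nat) :=
  g_sigma_algebraType (@open ('rV[R]_d)).

Definition dotp (R : realType) (d : nat) (x y : 'rV[R]_d) : R :=
  \sum_(i < d) x ord0 i * y ord0 i.
Definition enorm (R : realType) (d : nat) (x : 'rV[R]_d) : R :=
  Num.sqrt (dotp x x).

Definition unit_sphere (R : realType) (d : nat) : set 'rV[R]_d :=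
  [set e | enorm e = 1].

Definition coneA (R : realType) (d : nat) (u e : 'rV[R]_d) (theta : R)
  : set (Rd R d) :=
  [set y : 'rV[R]_d | dotp (u - y) e <=
     enorm (u - y) * (`|sin theta| / Num.sqrt (1 - sin theta ^+ 2))].

Definition halfspace (R : realType) (d : nat) (u v : 'rV[R]_d) : set (Rd R d) :=
  [set y : 'rV[R]_d | 0 <= dotp (y - u) v].

(* Main.v *)
Require Import Defs.
From HB Require Import structures.
From mathcomp Require Import all_boot all_order all_algebra.
From mathcomp Require Import all_classical all_reals all_analysis.
Import Order.TTheory GRing.Theory Num.Theory.
Import numFieldNormedType.Exports.
Local Open Scope classical_set_scope.
Local Open Scope ring_scope.
Lemma dot_cvg (R : realType) (d : nat) (T : Type) (F : set_system T) {FF : Filter F}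
  (f g : T -> 'rV[R]_d) a b :
  f @ F --> a -> g @ F --> b -> dotp (f x) (g x) @[x --> F] --> dotp a b.
Proof.
move=> fa gb.
have H i : (f x ord0 i * g x ord0 i) @[x --> F] --> a ord0 i * b ord0 i.
  apply: cvgM.
  - exact: (continuous_cvg _ (@coord_continuous _ _ _ ord0 i a)).
  - exact: (continuous_cvg _ (@coord_continuous _ _ _ ord0 i b)).
rewrite /dotp; elim: (index_enum _) => [|i r IH].
  rewrite big_nil; under eq_fun do rewrite big_nil; exact: cvg_cst.
rewrite big_cons; under eq_fun do rewrite big_cons; exact: cvgD.
Qed.

Lemma enorm_cvg (R : realType) (d : nat) (T : Type) (F : set_system T) {FF : Filter F}
  (f : T -> 'rV[R]_d) a :
  f @ F --> a -> enorm (f x) @[x --> F] --> enorm a.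
Proof.
move=> fa; rewrite /enorm.
apply: continuous_cvg; [exact: sqrt_continuous | exact: dot_cvg].
Qed.

Lemma closed_meas (R : realType) (d : nat) (A : set 'rV[R]_d) :
  closed A -> measurable (A : set (Rd R d)).
Proof.
move=> cA; rewrite -(setCK A); apply: measurableC.
apply: sub_gen_smallest; exact: closed_openC.
Qed.

Lemma closed_ge0 (R : realType) (d : nat) (g : 'rV[R]_d -> R) :
  (forall y0, g y @[y --> y0] --> g y0) -> closed [set y | 0 <= g y].
Proof.
move=> gc; apply: (@preimage_closed _ _ g [set x | 0 <= x]).
  by move=> y _; exact: gc.
exact: closed_ge.
Qed.

Lemma subl_cvg (R : realType) (d : nat) (u y0 : 'rV[R]_d) :
  u - x @[x --> nbhs y0] --> u - y0.
Proof.
have h1 : x @[x --> nbhs y0] --> y0 by exact: cvg_id.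
have h2 := cvgB (cvg_cst u) h1.
exact: h2.
Qed.

Lemma subr_cvg (R : realType) (d : nat) (u y0 : 'rV[R]_d) :
  x - u @[x --> nbhs y0] --> y0 - u.
Proof.
have h1 : x @[x --> nbhs y0] --> y0 by exact: cvg_id.
have h2 := cvgB h1 (cvg_cst u).
exact: h2.
Qed.
Lemma dotNl (R : realType) (d : nat) (x v : 'rV[R]_d) : dotp (- x) v = - dotp x v.
Proof. by rewrite /dotp -sumrN; apply: eq_bigr => i _; rewrite mxE mulNr. Qed.

Lemma tan_cvg (R : realType) (theta : nat -> R) : theta @ \oo --> 0 ->
  (`|sin (theta k)| / Num.sqrt (1 - sin (theta k) ^+ 2)) @[k --> \oo] --> 0.
Proof.
move=> th.
have s0 : sin (theta k) @[k --> \oo] --> 0.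
  rewrite -(sin0 R); apply: continuous_cvg => //; exact: continuous_sin.
have h1 : `|sin (theta k)| @[k --> \oo] --> 0.
  by rewrite -(@normr0 _ R^o); apply: cvg_norm.
have h2a : (1 - sin (theta k) ^+ 2) @[k --> \oo] --> (1:R).
  have H := cvgB (cvg_cst (1:R)) (cvgM s0 s0).
  rewrite mulr0 subr0 in H.
  under eq_fun do rewrite expr2.
  exact: H.
have h2 : Num.sqrt (1 - sin (theta k) ^+ 2) @[k --> \oo] --> (1:R).
  rewrite -[X in _ --> X]sqrtr1; apply: continuous_cvg; [exact: sqrt_continuous | exact: h2a].
have := cvgM h1 (cvgV (oner_neq0 R) h2).
by rewrite mul0r; apply; exact: nat_filter.
Qed.
Theorem mainTheorem6 (R : realType) (d : nat) (mu : probability (Rd R d) R)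
  (u : 'rV[R]_d) (theta : nat -> R) (vs : nat -> 'rV[R]_d) (v : 'rV[R]_d) :
  (forall k, 0 < theta k < pi / 2) ->
  (forall k, unit_sphere (vs k)) ->
  theta @ \oo --> 0 ->
  vs @ \oo --> v ->
  (limn_esup (fun k => mu (coneA u (vs k) (theta k))) <= mu (halfspace u v))%E.
Proof.
move=> _ _ th vv.
set t := fun k => `|sin (theta k)| / Num.sqrt (1 - sin (theta k) ^+ 2).
have tc : t k @[k --> \oo] --> 0 by exact: tan_cvg.
set A := fun k => coneA u (vs k) (theta k).
have mA k : measurable (A k).
  apply: closed_meas.
  have -> : A k = [set y | 0 <= enorm (u - y) * t k - dotp (u - y) (vs k)].
    by apply/seteqP; split => y /=; rewrite subr_ge0.
  apply: closed_ge0 => y0.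
  have e1 : enorm (u - y) @[y --> y0] --> enorm (u - y0).
    apply: (@enorm_cvg _ _ _ (nbhs y0)); exact: subl_cvg.
  have e2 : dotp (u - y) (vs k) @[y --> y0] --> dotp (u - y0) (vs k).
    apply: (@dot_cvg _ _ _ (nbhs y0)); [exact: subl_cvg | exact: cvg_cst].
  have h := cvgB (cvgM e1 (cvg_cst (t k))) e2.
  exact: h.
have mH : measurable (halfspace u v : set (Rd R d)).
  apply: closed_meas.
  apply: (@closed_ge0 R d (fun y => dotp (y - u) v)) => y0.
  apply: (@dot_cvg _ _ _ (nbhs y0)); [exact: subr_cvg | exact: cvg_cst].
set B := fun n => \bigcup_(k in [set k | (n <= k)%N]) A k.
have mB n : measurable (B n) by apply: bigcup_measurable => k _; exact: mA.
have mC : measurable (\bigcap_n B n) by apply: bigcap_measurable => //; exists 0%N.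
have niB : nonincreasing_seq B.
  move=> m n /= mn; apply/subsetPset => y [k /= nk Ak]; exists k => //=; exact: leq_trans nk.
have cB : mu \o B @ \oo --> mu (\bigcap_n B n).
  apply: nonincreasing_cvg_mu => //.
  by rewrite (le_lt_trans (probability_le1 mu (mB 0%N))) // ltry.
have CH : \bigcap_n B n `<=` halfspace u v.
  move=> y Cy; rewrite /halfspace /=.
  rewrite -opprB dotNl oppr_ge0 leNgt; apply/negP => pos.
  have sc : (dotp (u - y) (vs k) - enorm (u - y) * t k) @[k --> \oo]
            --> dotp (u - y) v - enorm (u - y) * 0.
    apply: cvgB; first by apply: dot_cvg => //; exact: cvg_cst.
    by apply: cvgM => //; exact: cvg_cst.
  rewrite mulr0 subr0 in sc.
  have [N _ HN] := cvgr_gt _ sc _ pos.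
  have [k /= Nk Ak] := Cy N I.
  have := HN k Nk; rewrite /= subr_gt0 ltNge.
  by move: Ak; rewrite /A /coneA /= => ->.
apply: (@le_trans _ _ (mu (\bigcap_n B n))); last first.
  by apply: le_measure => //; rewrite inE.
rewrite limn_esup_lim -(cvg_lim _ cB) //.
apply: lee_lim.
- exact: is_cvg_esups.
- exact: (cvgP _ cB).
- apply: nearW => n /=; apply: ge_ereal_sup.
  move=> x; rewrite /sdrop /=; case=> k nk <-.
  apply: le_measure; [rewrite inE; exact: mA | rewrite inE; exact: mB | ].
  by move=> y Ay; exists k.
Qed.
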